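(* Let $X = \langle x_1,\dots,x_L\rangle$ be a random sequence with distribution $p$ over $\mathcal{V}^L$ for a finite vocabulary $\mathcal{V}$, fix distinct indices $i,j$ and fix the values of the other tokens $X_{\setminus\{i,j\}}$. Let $p_\theta(\cdot \mid X_{\setminus i})$ be any model assigning, for every masked sequence $X_{\setminus i}$, a probability distribution over $\mathcal{V}$ for the masked token. Define $$I_p = \mathbb{E}_{x_i,x_j}\Big[\log p\big(x_i \mid X_{\setminus i}(j,x_j)\big) - \log \mathbb{E}_{x_j'}\, p\big(x_i \mid X_{\setminus i}(j,x_j')\big)\Big],$$ $$\hat I_{p_\theta} = \mathbb{E}_{x_i,x_j}\Big[\log p_\theta\big(x_i \mid X_{\setminus i}(j,x_j)\big) - \log \mathbb{E}_{x_j'}\, p_\theta\big(x_i \mid X_{\setminus i}(j,x_j')\big)\Big],$$ where $(x_i,x_j)$ is drawn from the true conditional distribution $p(x_i,x_j \mid X_{\setminus\{i,j\}})$ and $x_j'$ is drawn from $p(x_j \mid X_{\setminus\{i,j\}})$ (so $I_p = I_p(x_i;x_j\mid X_{\setminus\{i,j\}})$ is the conditional mutual information). Then $$\big|\hat I_{p_\theta} - I_p\big| \le \mathbb{E}_{x_j}\, D_{\mathrm{KL}}\Big(p\big(x_i \mid X_{\setminus i}(j,x_j)\big)\,\Big\|\, p_\theta\big(x_i \mid X_{\setminus i}(j,x_j)\big)\Big),$$ with $x_j \sim p(x_j\mid X_{\setminus\{i,j\}})$.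
   Context: For a sequence $X$, $X_{\setminus i}$ denotes $X$ with the $i$th token replaced by a special mask token, and $X_{\setminus\{i,j\}}$ denotes $X$ with both the $i$th and $j$th tokens masked. $X(j,v)$ denotes $X$ with its $j$th token replaced by $v \in \mathcal{V}$; thus $X_{\setminus i}(j,x_j)$ is the sequence with token $i$ masked, token $j$ equal to $x_j$, and all other tokens fixed. $D_{\mathrm{KL}}$ is the Kullback–Leibler divergence (possibly $+\infty$, in which case the bound is trivial). *)

(* Defs.v *)
From HB Require Import structures.
From mathcomp Require Import all_boot all_order all_algebra.
From mathcomp Require Import all_classical all_reals.
From mathcomp Require Import all_analysis.

Set Implicit Arguments.
Unset Strict Implicit.
Unset Printing Implicit Defensive.

Import Order.TTheory GRing.Theory Num.Theory.
Local Open Scope ring_scope.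

Section Defs.
Variables (R : realType) (V : finType) (L : nat).

(* Full sequences in V^L and masked sequences (None = mask token). *)
Definition fseq := {ffun 'I_L -> V}.
Definition mseq := {ffun 'I_L -> option V}.

Definition is_dist (T : finType) (P : T -> R) :=
  (forall t, 0 <= P t) /\ \sum_(t : T) P t = 1.

Definition maskv (i : 'I_L) (X : fseq) : mseq :=
  [ffun k => if k == i then None else Some (X k)].

Definition setm (Y : mseq) (j : 'I_L) (v : V) : mseq :=
  [ffun k => if k == j then Some v else Y k].

Definition setf (X : fseq) (j : 'I_L) (v : V) : fseq :=
  [ffun k => if k == j then v else X k].

Definition unmask (Y : mseq) (a : V) : fseq :=
  [ffun k => if Y k is Some v then v else a].

(* True conditional p(x_i = a | Y), Y having position i masked. *)
Definition condp (p : fseq -> R) (Y : mseq) (a : V) : R :=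
  p (unmask Y a) / \sum_(a' : V) p (unmask Y a').

Definition fill (X : fseq) (i j : 'I_L) (a b : V) : fseq :=
  setf (setf X i a) j b.

Definition joint (p : fseq -> R) (X : fseq) (i j : 'I_L) (a b : V) : R :=
  p (fill X i j a b) / \sum_(a' : V) \sum_(b' : V) p (fill X i j a' b').

Definition marg_j (p : fseq -> R) (X : fseq) (i j : 'I_L) (b : V) : R :=
  \sum_(a : V) joint p X i j a b.

Definition plugin_mi (p : fseq -> R) (r : mseq -> V -> R)
    (X : fseq) (i j : 'I_L) : R :=
  \sum_(a : V) \sum_(b : V) joint p X i j a b *
    (ln (r (setm (maskv i X) j b) a)
     - ln (\sum_(b' : V) marg_j p X i j b' * r (setm (maskv i X) j b') a)).

Definition KL (P Q : V -> R) : \bar R :=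
  (\sum_(a : V)
     (if P a == 0%R then 0%E
      else if Q a == 0%R then +oo%E
      else ((P a * ln (P a / Q a))%R)%:E))%E.

End Defs.

(* Main.v *)
Require Import Defs.
From HB Require Import structures.
From mathcomp Require Import all_boot all_order all_algebra.
From mathcomp Require Import all_classical all_reals.
From mathcomp Require Import all_analysis.
From mathcomp Require Import ring lra.
Import Order.TTheory GRing.Theory Num.Theory.
Local Open Scope ring_scope.

Lemma ln_le_sub1 (R : realType) (x : R) : 0 < x -> ln x <= x - 1.
Proof.
move=> x0; have := expR_ge1Dx (ln x); rewrite lnK ?posrE //; lra.
Qed.

Lemma lnsub_le (R : realType) (x y : R) : 0 < x -> 0 < y -> ln x - ln y <= x / y - 1.
Proof.
move=> x0 y0; rewrite -ln_div ?posrE //; apply: ln_le_sub1; exact: divr_gt0.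
Qed.

Lemma abstract_bound (R : realType) (A B : finType)
  (J : A -> B -> R) (q : B -> R) (P T : B -> A -> R) :
  (forall a b, 0 <= J a b) ->
  \sum_a \sum_b J a b = 1 ->
  (forall b, q b = \sum_a J a b) ->
  (forall a b, J a b = q b * P b a) ->
  (forall b a, 0 <= P b a) ->
  (forall b a, 0 <= T b a) ->
  (forall b, \sum_a T b a = 1) ->
  (forall a b, 0 < J a b -> 0 < T b a) ->
  `| \sum_a \sum_b J a b * (ln (T b a) - ln (\sum_b' q b' * T b' a))
     - \sum_a \sum_b J a b * (ln (P b a) - ln (\sum_b' q b' * P b' a)) |
  <= \sum_b q b * \sum_a (if P b a == 0 then 0 else P b a * ln (P b a / T b a)).
Proof.
move=> J0 J1 hq hP P0 T0 T1 hfin.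
have q0 b : 0 <= q b by rewrite hq; apply: sumr_ge0 => a _.
set m := fun a => \sum_b J a b.
set M := fun a => \sum_b q b * T b a.
have m0 a : 0 <= m a by apply: sumr_ge0.
have M0 a : 0 <= M a by apply: sumr_ge0 => b _; apply: mulr_ge0.
have hm a : \sum_b q b * P b a = m a by apply: eq_bigr => b _; rewrite hP.
have Jpos a b : 0 < J a b -> [/\ 0 < q b, 0 < P b a, 0 < T b a & 0 < M a /\ 0 < m a].
  move=> Jab.
  have qb : 0 < q b.
    rewrite lt0r q0 andbT; apply/eqP => qb0; move: Jab; rewrite hP qb0 mul0r; lra.
  have Pb : 0 < P b a.
    rewrite lt0r P0 andbT; apply/eqP => qb0; move: Jab; rewrite hP qb0 mulr0; lra.
  have Tb := hfin a b Jab.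
  split=> //; split.
  - rewrite lt0r M0 andbT psumr_neq0; last by move=> b' _; apply: mulr_ge0.
    by apply/hasP; exists b; rewrite ?mem_index_enum //= mulr_gt0.
  - rewrite lt0r m0 andbT psumr_neq0 //.
    by apply/hasP; exists b; rewrite ?mem_index_enum.
set E := \sum_b q b * _.
set f := fun a b => if J a b == 0 then 0 else J a b * (ln (P b a) - ln (T b a)).
have hE : E = \sum_a \sum_b f a b.
  rewrite /E exchange_big /=; apply: eq_bigr => b _; rewrite mulr_sumr.
  apply: eq_bigr => a _; rewrite /f.
  have [Jab0|JabN] := eqVneq (J a b) 0.
    case: ifP => [_|/negbT Pn]; first by rewrite mulr0.
    move: Jab0; rewrite hP => /eqP; rewrite mulf_eq0 (negbTE Pn) orbF => /eqP ->.
    by rewrite mul0r.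
  have [Jp|Jn] : 0 < J a b \/ J a b < 0 by move: (J0 a b) JabN; case: ltgtP => //; auto.
    have [qb Pb Tb _] := Jpos a b Jp.
    rewrite (gt_eqF Pb) ln_div ?posrE // hP mulrA //.
  by move: (J0 a b); lra.
set K := \sum_a \sum_b J a b * (ln (m a) - ln (M a)).
have hD : \sum_a \sum_b J a b * (ln (T b a) - ln (M a))
     - \sum_a \sum_b J a b * (ln (P b a) - ln (\sum_b' q b' * P b' a)) = K - E.
  rewrite hE /K -!sumrB; apply: eq_bigr => a _; rewrite -!sumrB; apply: eq_bigr => b _.
  rewrite hm /f; case: eqP => [->|_]; first by rewrite !mul0r subr0.
  ring.
rewrite hD.
have Ksum : K = \sum_a m a * (ln (m a) - ln (M a)).
  by rewrite /K; apply: eq_bigr => a _; rewrite /m mulr_suml.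
have sumM : \sum_a M a = 1.
  rewrite /M exchange_big /= -J1 [RHS]exchange_big /=; apply: eq_bigr => b _.
  by rewrite -mulr_sumr T1 mulr1 hq.
have K0 : 0 <= K.
  suff : \sum_a m a * (ln (M a) - ln (m a)) <= 0.
    rewrite Ksum -oppr_ge0 -sumrN => H; apply: le_trans H _; apply: ler_sum => a _.
    by rewrite -mulrN opprB.
  apply: (@le_trans _ _ (\sum_a (M a - m a))).
    apply: ler_sum => a _.
    have [m00|mn] := eqVneq (m a) 0; first by rewrite m00 mul0r subr0.
    have mp : 0 < m a by rewrite lt0r mn m0.
    have [b _ /= Jp] : exists2 b, b \in index_enum B & 0 < J a b.
      by apply/hasP; move: mn; rewrite /m psumr_neq0 // => i _; exact: J0.
    have [_ _ _ [Mp _]] := Jpos a b Jp.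
    have := @lnsub_le R _ _ Mp mp => H.
    have H2 := ler_wpM2l (ltW mp) H.
    by rewrite (_ : m a * (M a / m a - 1) = M a - m a) in H2; last by field.
  by rewrite sumrB sumM J1 subrr.
have KE : K <= E.
  rewrite -subr_ge0 hE /K -sumrB -oppr_le0 -sumrN.
  apply: (@le_trans _ _ (\sum_a \sum_b (q b * T b a * (m a / M a) - J a b))).
    apply: ler_sum => a _; rewrite opprB -sumrB; apply: ler_sum => b _.
    rewrite /f; case: eqP => [->|Jn].
      rewrite mul0r !subr0; apply: mulr_ge0; first by apply: mulr_ge0.
      exact: divr_ge0.
    have Jp : 0 < J a b by rewrite lt0r J0 andbT; apply/eqP.
    have [qb Pb Tb [Mp mp]] := Jpos a b Jp.
    have H := @lnsub_le R _ _ (mulr_gt0 mp Tb) (mulr_gt0 Mp Pb).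
    rewrite !lnM ?posrE // in H.
    have H2 := ler_wpM2l (ltW Jp) H.
    apply: le_trans (_ : J a b * (m a * T b a / (M a * P b a) - 1) <= _).
      apply: le_trans H2; rewrite le_eqVlt; apply/orP; left; apply/eqP; ring.
    rewrite le_eqVlt; apply/orP; left; apply/eqP; rewrite hP.
    field; apply/andP; split; apply/lt0r_neq0 => //.
  under eq_bigr => a _ do rewrite sumrB.
  rewrite sumrB J1 subr_le0.
  rewrite -[leRHS]J1; apply: ler_sum => a _.
  rewrite -mulr_suml.
  rewrite -/(M a).
  have [M00|Mn] := eqVneq (M a) 0; first by rewrite M00 mul0r; exact: m0.
  by rewrite mulrCA divff // mulr1.
have E0 : 0 <= E by apply: le_trans KE.
rewrite ler_norml; apply/andP; split; lra.
Qed.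

Lemma unmask_setm (V : finType) (L : nat) (X : fseq V L) (i j : 'I_L) (a b : V) :
  unmask (setm (maskv i X) j b) a = fill X i j a b.
Proof.
apply/ffunP => k; rewrite /fill /setf !ffunE.
case: (k == j) => //; rewrite ?ffunE; by case: (k == i).
Qed.

Lemma mul_ne_Ny (R : realType) (x : R) (y : \bar R) :
  0 <= x -> y != -oo%E -> (x%:E * y)%E != -oo%E.
Proof.
move=> x0; case: y => [r||] // _.
have [->|xp] := eqVneq x 0; first by rewrite mul0e.
by rewrite gt0_muley // lte_fin lt0r xp x0.
Qed.

Theorem proposition4 (R : realType) (V : finType) (L : nat)
    (p : fseq V L -> R) (ptheta : mseq V L -> V -> R)
    (i j : 'I_L) (X : fseq V L) :
  is_dist p ->
  (forall Y : mseq V L, is_dist (ptheta Y)) ->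
  i != j ->
  0 < \sum_(a : V) \sum_(b : V) p (fill X i j a b) ->
  ((`| plugin_mi p ptheta X i j - plugin_mi p (condp p) X i j |)%:E
   <= \sum_(b : V) (marg_j p X i j b)%:E *
        KL (condp p (setm (maskv i X) j b)) (ptheta (setm (maskv i X) j b)))%E.
Proof.
move=> [p0 p1] hT ij Zp.
set Z := \sum_a \sum_b p (fill X i j a b) in Zp.
set J := joint p X i j.
set q := marg_j p X i j.
set P := fun b => condp p (setm (maskv i X) j b).
set T := fun b => ptheta (setm (maskv i X) j b).
have hcond b a : P b a = p (fill X i j a b) / \sum_a' p (fill X i j a' b).
  rewrite /P /condp unmask_setm; congr (_ / _).
  by apply: eq_bigr => a' _; rewrite unmask_setm.
have J0 a b : 0 <= J a b by apply: divr_ge0 => //; exact: ltW.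
have J1 : \sum_a \sum_b J a b = 1.
  rewrite /J /joint; under eq_bigr => a _ do rewrite -mulr_suml.
  by rewrite -mulr_suml divff // lt0r_neq0.
have hq b : q b = \sum_a J a b by [].
have w0 b : 0 <= \sum_a' p (fill X i j a' b) by apply: sumr_ge0.
have hP a b : J a b = q b * P b a.
  rewrite hq hcond /J /joint -mulr_suml.
  have [w00|wn] := eqVneq (\sum_a' p (fill X i j a' b)) 0.
    have := @psumr_eq0P R V xpredT (fun a => p (fill X i j a b)) (fun a _ => p0 _) w00 a isT => ->.
    by rewrite !mul0r mulr0.
  by field; apply/andP; split => //; apply: lt0r_neq0.
have P0 b a : 0 <= P b a by rewrite hcond; apply: divr_ge0.
have T0 b a : 0 <= T b a by case: (hT (setm (maskv i X) j b)) => H _; apply: H.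
have T1 b : \sum_a T b a = 1 by case: (hT (setm (maskv i X) j b)).
have q0 b : 0 <= q b by rewrite hq; apply: sumr_ge0.
case: (boolP [exists b, exists a, [&& 0 < q b, P b a != 0 & T b a == 0]]).
  move=> /existsP [b /existsP [a /and3P [qb Pn /eqP Tz]]].
  suff -> : (\sum_b (q b)%:E * KL (P b) (T b))%E = +oo%E by apply: leey.
  have KLn b' : KL (P b') (T b') != -oo%E.
    rewrite /KL esum_eqNy; apply/negP => /existsP [a' /=].
    by case: ifP => //; case: ifP.
  apply/esum_eqyP.
    by move=> b' _; apply: mul_ne_Ny.
  exists b; split => //.
  suff -> : KL (P b) (T b) = +oo%E by rewrite gt0_muley ?lte_fin.
  apply/esum_eqyP; first by move=> a' _; case: ifP => //; case: ifP.
  by exists a; split => //; rewrite ?mem_index_enum // (negbTE Pn) Tz eqxx.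
rewrite negb_exists => /forallP hnb.
have hfin a b : 0 < J a b -> 0 < T b a.
  move=> Jp; have qb : 0 < q b.
    rewrite lt0r q0 andbT; apply/eqP => qb0; move: Jp; rewrite hP qb0 mul0r; lra.
  have Pn : P b a != 0.
    apply/eqP => Pb0; move: Jp; rewrite hP Pb0 mulr0; lra.
  have := hnb b; rewrite negb_exists => /forallP /(_ a); rewrite qb Pn /= => Tn.
  by rewrite lt0r Tn T0.
have -> : (\sum_b (q b)%:E * KL (P b) (T b))%E =
    (\sum_b q b * \sum_a (if P b a == 0 then 0 else P b a * ln (P b a / T b a)))%:E.
  rewrite -sumEFin; apply: eq_bigr => b _.
  have [->|qn] := eqVneq (q b) 0; first by rewrite mul0e mul0r.
  have qb : 0 < q b by rewrite lt0r qn q0.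
  rewrite EFinM; congr (_ * _)%E; rewrite /KL -sumEFin; apply: eq_bigr => a _.
  case: ifP => // Pn; have := hnb b; rewrite negb_exists => /forallP /(_ a).
  by rewrite qb Pn /= => /negbTE ->.
rewrite lee_fin.
have H := @abstract_bound R V V J q P T J0 J1 hq hP P0 T0 T1 hfin.
exact H.
Qed.
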